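(* Fix an integer $d\ge 2$. For any $n^*,m^*<\infty$ and $\varepsilon>0$ there exist constants $r_1>0$ and $C>0$ such that every pair of integers $n\ge d$, $m\ge2$ with $\sigma_{n,m}^2\ge r_1$ satisfies: (a) $n>n^*$ and $m>m^*$; (b) $n/m\le (1+\varepsilon)\log m$; (c) $\mu_{n,m}\le C\sigma_{n,m}^2$.
   Context: Uniform multinomial occupancy model: $n$ balls distributed independently and uniformly over $m$ urns; $Y_n$ is the number of urns with exactly $d$ balls; $\mu_{n,m}=EY_n=m\binom{n}{d}m^{-d}(1-1/m)^{n-d}$ and $\sigma_{n,m}^2=\mathrm{Var}(Y_n)=\mu_{n,m}+m(m-1)\frac{n!}{d!d!(n-2d)!}m^{-2d}(1-2/m)^{n-2d}-\mu_{n,m}^2$, with the middle term $0$ when $n<2d$. *)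

(* Defs.v *)
From Stdlib Require Import Reals Lra Lia Arith Factorial.
Open Scope R_scope.

Definition binomR (n d : nat) : R :=
  if (d <=? n)%nat then INR (fact n) / (INR (fact d) * INR (fact (n - d))) else 0.

Definition multi2R (n d : nat) : R :=
  if (2 * d <=? n)%nat
  then INR (fact n) / (INR (fact d) * INR (fact d) * INR (fact (n - 2 * d)))
  else 0.

(* mu_{n,m} = E Y_n = m C(n,d) m^{-d} (1 - 1/m)^{n-d} *)
Definition mu (d n m : nat) : R :=
  INR m * binomR n d * (/ INR m) ^ d * (1 - / INR m) ^ (n - d).

(* sigma^2_{n,m} = Var Y_n *)
Definition sigma2 (d n m : nat) : R :=
  mu d n m
  + INR m * (INR m - 1) * multi2R n d * (/ INR m) ^ (2 * d)
      * (1 - 2 / INR m) ^ (n - 2 * d)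
  - (mu d n m) ^ 2.

(* Main.v *)
Require Import Defs.
From Stdlib Require Import Reals Lra Lia Psatz Arith Factorial.
Open Scope R_scope.

Lemma exp_le_mono a b : a <= b -> exp a <= exp b.
Proof. intros [H|H]. left; now apply exp_increasing. right; now subst. Qed.

Lemma exp_pow_n a k : exp a ^ k = exp (INR k * a).
Proof.
  induction k as [|k IH]. simpl. rewrite Rmult_0_l, exp_0. reflexivity.
  rewrite S_INR. simpl pow. rewrite IH, <- exp_plus. f_equal. ring.
Qed.

Lemma one_minus_le_exp x : 1 - x <= exp (- x).
Proof. pose proof (exp_ineq1_le (-x)). lra. Qed.

Lemma pow_le_exp x k : 0 <= x <= 1 -> (1 - x) ^ k <= exp (- (INR k * x)).
Proof.
  intros Hx. replace (- (INR k * x)) with (INR k * (-x)) by ring.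
  rewrite <- exp_pow_n. apply pow_incr. split; [lra|]. apply one_minus_le_exp.
Qed.

Lemma bernoulli y k : y <= 1 -> 1 - INR k * y <= (1 - y) ^ k.
Proof.
  intros Hy. induction k as [|k IH]. simpl. lra.
  rewrite S_INR. simpl pow.
  assert (0 <= 1 - y) by lra.
  destruct (Rle_dec 0 y).
  - assert (0 <= INR k) by apply pos_INR. nra.
  - assert (1 <= (1-y)^k).
    { replace 1 with (1^k) at 1 by apply pow1. apply pow_incr. lra. }
    assert (0 <= INR k) by apply pos_INR. nra.
Qed.

Lemma poly_exp lam c k : 0 <= lam -> 0 < c -> lam ^ k <= (INR k / c) ^ k * exp (c * lam).
Proof.
  intros Hl Hc. destruct k as [|k].
  - simpl. pose proof (exp_ineq1_le (c*lam)). nra.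
  - set (K := INR (S k)). assert (HK : 0 < K) by (apply lt_0_INR; lia).
    assert (H1 : c * lam / K <= exp (c * lam / K)).
    { pose proof (exp_ineq1_le (c*lam/K)). lra. }
    assert (H2 : (c*lam/K)^(S k) <= exp (c*lam/K) ^ (S k)).
    { apply pow_incr. split; [|exact H1]. apply Rmult_le_pos; [nra|]. left; now apply Rinv_0_lt_compat. }
    rewrite exp_pow_n in H2. fold K in H2.
    replace (K * (c * lam / K)) with (c*lam) in H2 by (field; lra).
    replace (lam ^ S k) with ((K/c)^(S k) * (c*lam/K)^(S k)).
    2:{ rewrite <- Rpow_mult_distr. f_equal. field; lra. }
    apply Rmult_le_compat_l; [|exact H2]. apply pow_le. apply Rmult_le_pos; [lra|]. left; now apply Rinv_0_lt_compat.
Qed.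

Lemma exp_minus_poly lam c k : 0 <= lam -> 0 < c -> exp (- (c*lam)) * lam ^ k <= (INR k / c) ^ k.
Proof.
  intros Hl Hc. pose proof (poly_exp lam c k Hl Hc).
  rewrite exp_Ropp. pose proof (exp_pos (c*lam)).
  apply Rmult_le_reg_l with (exp (c*lam)); [lra|].
  rewrite <- Rmult_assoc, Rinv_r by lra. nra.
Qed.

Lemma e_ge : 2.6 <= exp 1.
Proof.
  replace 1 with (INR 16 * (1/16)) by (simpl; field).
  rewrite <- exp_pow_n. apply Rle_trans with ((17/16)^16). lra.
  apply pow_incr. pose proof (exp_ineq1_le (1/16)). lra.
Qed.

Lemma v_le1 u : u * exp (1 - u) <= 1.
Proof.
  pose proof (exp_ineq1_le (u-1)). pose proof (exp_pos (1-u)).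
  assert (exp (u-1) * exp (1-u) = 1) by (rewrite <- exp_plus; replace (u-1+(1-u)) with 0 by ring; apply exp_0).
  nra.
Qed.

Lemma sq_bound u : 0 <= u -> (u-1)^2 * exp (1-u) <= 4 * (1 - u * exp (1-u)).
Proof.
  intros Hu.
  assert (He : exp (u-1) = exp ((u-1)/2) ^ 2).
  { rewrite exp_pow_n. f_equal. simpl. field. }
  assert (H1 : (1 + (u-1)/2)^2 <= exp ((u-1)/2)^2).
  { apply pow_incr. split. lra. apply exp_ineq1_le. }
  assert (exp (u-1) * exp (1-u) = 1) by (rewrite <- exp_plus; replace (u-1+(1-u)) with 0 by ring; apply exp_0).
  pose proof (exp_pos (1-u)).
  assert ((u-1)^2 <= 4 * (exp (u-1) - u)) by (rewrite He; nra).
  nra.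
Qed.

Lemma vk_bound v k : 0 <= v <= 1 -> (1 <= k)%nat -> v ^ k * (1 - v) <= exp (-1) / INR k.
Proof.
  intros Hv Hk. assert (HK : 0 < INR k) by (apply lt_0_INR; lia).
  assert (H1 : v ^ k <= exp (INR k * (v - 1))).
  { rewrite <- exp_pow_n. apply pow_incr. split. lra. pose proof (exp_ineq1_le (v-1)). lra. }
  set (z := INR k * (1 - v)).
  assert (H2 : z * exp (-z) <= exp (-1)).
  { pose proof (exp_ineq1_le (z-1)).
    assert (exp (z-1) * exp (-z) = exp (-1)) by (rewrite <- exp_plus; f_equal; ring).
    pose proof (exp_pos (-z)). nra. }
  replace (INR k * (v-1)) with (-z) in H1 by (unfold z; ring).
  apply Rmult_le_reg_l with (INR k); [lra|].
  replace (INR k * (exp (-1) / INR k)) with (exp (-1)) by (field; lra).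
  assert (0 <= 1 - v) by lra.
  assert (v^k*(1-v) <= exp(-z) * (1-v)) by (apply Rmult_le_compat_r; lra).
  unfold z in *. nra.
Qed.

Lemma Ad_mono j : let d := (3 + j)%nat in
  INR d ^ d * exp (- INR d) <= 4.5 * exp (-3) * INR (fact d).
Proof.
  induction j as [|j IH]; intros d.
  - unfold d. replace (exp (- INR (3+0))) with (exp (-3)) by (f_equal; simpl; ring).
    replace (INR (3+0)) with 3 by (simpl; ring).
    replace (INR (fact (3+0))) with 6 by (simpl; ring).
    pose proof (exp_pos (-3)). simpl pow; nra.
  - simpl in IH. unfold d. 
    set (k := (3 + j)%nat) in *.
    replace (3 + S j)%nat with (S k) by (unfold k; lia).
    assert (Hk : 0 < INR k) by (apply lt_0_INR; unfold k; lia).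
    assert (H1 : (INR k + 1) ^ k <= INR k ^ k * exp 1).
    { replace (INR k + 1) with (INR k * (1 + / INR k)) by (field; lra).
      rewrite Rpow_mult_distr. apply Rmult_le_compat_l. apply pow_le; lra.
      replace 1 with (INR k * / INR k) at 2 by (field; lra).
      rewrite <- exp_pow_n. apply pow_incr. split.
      assert (0 < / INR k) by (apply Rinv_0_lt_compat; lra). lra. apply exp_ineq1_le. }
    rewrite fact_simpl, mult_INR, S_INR. simpl pow.
    replace (- (INR k + 1)) with (- INR k + - 1) by ring. rewrite exp_plus.
    assert (He1 : exp 1 * exp (-1) = 1) by (rewrite <- exp_plus; replace (1 + -1) with 0 by ring; apply exp_0).
    pose proof (exp_pos (- INR k)). pose proof (exp_pos (-1)).
    assert (0 <= (INR k + 1)^k) by (apply pow_le; lra).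
    assert (Hmain : (INR k + 1) * (INR k + 1) ^ k * (exp (- INR k) * exp (-1))
                 <= (INR k + 1) * (INR k ^ k * exp (- INR k))).
    { replace ((INR k + 1) * (INR k + 1) ^ k * (exp (- INR k) * exp (-1))) with
        ((INR k + 1) * exp (- INR k) * ((INR k + 1) ^ k * exp (-1))) by ring.
      replace ((INR k + 1) * (INR k ^ k * exp (- INR k))) with
        ((INR k + 1) * exp (- INR k) * (INR k ^ k * exp 1 * exp (-1))) by (rewrite (Rmult_assoc (INR k ^ k)), He1; ring).
      apply Rmult_le_compat_l. nra. apply Rmult_le_compat_r; lra. }
    eapply Rle_trans; [exact Hmain|].
    replace (4.5 * exp (-3) * ((INR k + 1) * INR (fact k))) with ((INR k + 1) * (4.5 * exp (-3) * INR (fact k))) by ring.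
    apply Rmult_le_compat_l; [lra|]. exact IH.
Qed.

Lemma einv_bound : exp (-1) <= / 2.6 /\ 0 < exp (-1).
Proof.
  pose proof e_ge. pose proof (exp_pos (-1)).
  assert (exp 1 * exp (-1) = 1) by (rewrite <- exp_plus; replace (1 + -1) with 0 by ring; apply exp_0).
  split; [|lra]. apply Rmult_le_reg_l with 2.6; [lra|]. rewrite Rinv_r by lra. nra.
Qed.

Lemma expn_int (k : nat) : exp (- INR k) = exp (-1) ^ k.
Proof. rewrite exp_pow_n. f_equal. ring. Qed.

Lemma G_bound d1 lam : (1 <= d1)%nat -> 0 <= lam ->
  exp (-lam) * (INR (S d1)^2 * lam^d1 - (2*INR (S d1) - 1)*lam^(S d1) + lam^(S (S d1)))
  <= 0.9 * INR (fact (S d1)).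
Proof.
  intros Hd1 Hl.
  pose proof (INR_fact_lt_0 (S d1)) as Hf.
  destruct (Req_dec lam 0) as [->|Hl0].
  { rewrite !pow_i by lia. lra. }
  assert (Hlp : 0 < lam) by lra.
  set (dr := INR (S d1)).
  assert (Hdr : 2 <= dr) by (unfold dr; rewrite S_INR; apply (le_INR 1) in Hd1; simpl in Hd1; lra).
  set (u := lam / dr).
  assert (Hu : 0 <= u) by (unfold u; apply Rmult_le_pos; [lra| left; apply Rinv_0_lt_compat; lra]).
  set (v := u * exp (1 - u)).
  assert (Hv0 : 0 <= v) by (unfold v; pose proof (exp_pos (1-u)); nra).
  assert (Hv1 : v <= 1) by apply v_le1.
  assert (E : exp (-lam) = exp (-dr) * exp (1-u)^(S d1)).
  { rewrite exp_pow_n, <- exp_plus. f_equal. fold dr. unfold u. field. lra. }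
  assert (Hid : exp (-lam) * (dr^2 * lam^d1 - (2*dr - 1)*lam^(S d1) + lam^(S (S d1)))
     = exp (-dr) * dr^(S d1) * v^d1 * (dr*((u-1)^2*exp(1-u)) + v)).
  { rewrite E. unfold v. replace lam with (dr*u) by (unfold u; field; lra).
    rewrite !Rpow_mult_distr. simpl pow. ring. }
  rewrite Hid.
  pose proof (sq_bound u Hu) as Hs. fold v in Hs.
  assert (Hb : exp (-dr) * dr^(S d1) * v^d1 * (dr*((u-1)^2*exp(1-u)) + v)
             <= exp (-dr) * dr^(S d1) * (v^d1 * (4*dr*(1-v) + v))).
  { rewrite Rmult_assoc. apply Rmult_le_compat_l.
    apply Rmult_le_pos. left; apply exp_pos. apply pow_le; lra.
    apply Rmult_le_compat_l. apply pow_le; lra. nra. }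
  eapply Rle_trans; [exact Hb|]. clear Hb Hid E.
  destruct (Nat.eq_dec d1 1) as [->|Hd2].
  -
    replace dr with 2 in * by (unfold dr; simpl; ring).
    assert (v ^ 1 * (4 * 2 * (1 - v) + v) <= 16/7) by (rewrite pow_1; pose proof (pow2_ge_0 (v - 4/7)); nra).
    destruct einv_bound as [He1 He2].
    replace (exp (Ropp 2)) with (exp (-1)^2) by (rewrite <- (expn_int 2); f_equal; simpl; ring).
    replace (INR (fact 2)) with 2 by (simpl; ring).
    rewrite pow_1 in H. simpl pow. rewrite !Rmult_1_r.
    assert (exp (-1) * exp (-1) <= /2.6 * /2.6) by nra.
    assert (0 <= v * (4 * 2 * (1 - v) + v)) by nra.
    assert (0 <= exp (-1) * exp (-1)) by nra.
    assert (exp (-1) * exp (-1) * (v * (4 * 2 * (1 - v) + v)) <= /2.6 * /2.6 * (16/7)).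
    { apply Rmult_le_compat; lra. }
    nra.
  - assert (Hd1' : (2 <= d1)%nat) by lia.
    assert (HA : exp (-dr) * dr^(S d1) <= 4.5 * exp (-3) * INR (fact (S d1))).
    { pose proof (Ad_mono (d1 - 2)) as HA. cbv zeta in HA.
      replace (3 + (d1 - 2))%nat with (S d1) in HA by lia. fold dr in HA. lra. }
    assert (HH : v^d1 * (4*dr*(1-v) + v) <= 1 + 6 * exp (-1)).
    { pose proof (vk_bound v d1 (conj Hv0 Hv1) ltac:(lia)) as Hk.
      assert (HK : 2 <= INR d1) by (apply (le_INR 2) in Hd1'; simpl in Hd1'; lra).
      assert (Hdd : dr = INR d1 + 1) by (unfold dr; apply S_INR).
      assert (v ^ d1 * v <= 1).
      { replace (v^d1*v) with (v^(S d1)) by (simpl; ring).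
        replace 1 with (1^(S d1)) by apply pow1. apply pow_incr; lra. }
      assert (0 < exp (-1)) by apply exp_pos.
      assert (4 * dr * (v^d1*(1-v)) <= 6 * exp (-1)).
      { apply Rle_trans with (4 * dr * (exp (-1) / INR d1)).
        apply Rmult_le_compat_l; lra.
        rewrite Hdd. apply Rmult_le_reg_l with (INR d1); [lra|].
        field_simplify; [|lra]. nra. }
      nra. }
    destruct einv_bound as [He1 He2].
    assert (E3 : exp (-3) = exp (-1)^3) by (rewrite <- (expn_int 3); f_equal; simpl; ring).
    assert (0 <= exp (-dr) * dr^(S d1)) by (apply Rmult_le_pos; [left; apply exp_pos| apply pow_le; lra]).
    assert (0 <= v^d1 * (4*dr*(1-v) + v)) by (apply Rmult_le_pos; [apply pow_le; lra| nra]).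
    apply Rle_trans with (4.5 * exp (-3) * INR (fact (S d1)) * (1 + 6 * exp (-1))).
    { apply Rle_trans with (exp (-dr) * dr ^ S d1 * (1 + 6 * exp (-1))).
      apply Rmult_le_compat_l; lra. apply Rmult_le_compat_r; lra. }
    rewrite E3. simpl pow.
    assert (exp (-1) * (exp (-1) * (exp (-1) * 1)) * (1 + 6 * exp (-1)) <= 0.2).
    { set (t := exp (-1)) in *. assert (t <= 0.385) by lra. 
      assert (t*t <= 0.385*0.385) by nra. assert (t*t*t <= 0.385*0.385*0.385) by nra. nra. }
    nra.
Qed.

Fixpoint ffr (y : R) (k : nat) : R :=
  match k with O => 1 | S k' => ffr y k' * (y - INR k') end.

Lemma fact_ffr n d : (d <= n)%nat -> INR (fact n) = INR (fact (n - d)) * ffr (INR n) d.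
Proof.
  induction d as [|d IH]; intros H.
  - simpl. rewrite Nat.sub_0_r. ring.
  - rewrite IH by lia. simpl ffr.
    replace (n - d)%nat with (S (n - S d)) by lia.
    rewrite fact_simpl, mult_INR.
    replace (INR (S (n - S d))) with (INR n - INR d).
    ring. replace (S (n - S d)) with (n - d)%nat by lia. rewrite minus_INR by lia. ring.
Qed.

Lemma binomR_ffr n d : (d <= n)%nat -> binomR n d = ffr (INR n) d / INR (fact d).
Proof.
  intros H. unfold binomR. replace (d <=? n)%nat with true by (symmetry; apply Nat.leb_le; lia).
  rewrite (fact_ffr n d H). pose proof (INR_fact_lt_0 d). pose proof (INR_fact_lt_0 (n-d)).
  field. lra.
Qed.

Lemma multi2R_eq n d : (2 * d <= n)%nat -> multi2R n d = binomR n d * binomR (n - d) d.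
Proof.
  intros H. unfold multi2R, binomR.
  replace (2 * d <=? n)%nat with true by (symmetry; apply Nat.leb_le; lia).
  replace (d <=? n)%nat with true by (symmetry; apply Nat.leb_le; lia).
  replace (d <=? n - d)%nat with true by (symmetry; apply Nat.leb_le; lia).
  replace (n - d - d)%nat with (n - 2 * d)%nat by lia.
  pose proof (INR_fact_lt_0 d). pose proof (INR_fact_lt_0 (n-d)). pose proof (INR_fact_lt_0 (n-2*d)).
  field. repeat split; lra.
Qed.

Lemma multi2R_zero n d : (n < 2 * d)%nat -> multi2R n d = 0.
Proof. intros H. unfold multi2R. replace (2 * d <=? n)%nat with false by (symmetry; apply Nat.leb_gt; lia). reflexivity. Qed.

Lemma ffr_bounds y k : INR k <= y -> 0 <= ffr y k <= y ^ k /\ (y - INR k) ^ k <= ffr y k.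
Proof.
  induction k as [|k IH]; intros H.
  - simpl. lra.
  - rewrite S_INR in H. assert (INR k <= y) by lra. destruct (IH H0) as [[H1 H2] H3].
    pose proof (pos_INR k). change (ffr y (S k)) with (ffr y k * (y - INR k)).
    rewrite S_INR. change (y ^ S k) with (y * y ^ k). change ((y - (INR k + 1)) ^ S k) with ((y - (INR k + 1)) * (y - (INR k + 1)) ^ k).
    assert (0 <= (y - (INR k + 1)) ^ k) by (apply pow_le; lra).
    assert ((y - (INR k + 1)) ^ k <= (y - INR k)^k) by (apply pow_incr; lra).
    repeat split; nra.
Qed.

Lemma ffr_diff y s k : 0 <= s -> INR (S k) + s <= y ->
  ffr y (S k) - ffr (y - s) (S k) <= INR (S k) * s * y ^ k.
Proof.
  induction k as [|k IH]; intros Hs H.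
  - simpl. lra.
  - assert (H' : INR (S k) + s <= y) by (rewrite (S_INR (S k)) in H; lra).
    specialize (IH Hs H').
    assert (HB := ffr_bounds (y - s) (S k) ltac:(lra)).
    destruct HB as [[B1 B2] _].
    assert (Hy : 0 <= y) by (pose proof (pos_INR (S k)); lra).
    assert ((y - s)^(S k) <= y^(S k)) by (pose proof (pos_INR (S k)); apply pow_incr; lra).
    change (ffr y (S (S k))) with (ffr y (S k) * (y - INR (S k))).
    change (ffr (y-s) (S (S k))) with (ffr (y - s) (S k) * (y - s - INR (S k))).
    rewrite (S_INR (S k)). 
    pose proof (pos_INR (S k)). 
    assert (0 <= y - INR (S k)) by lra.
    assert (0 <= y ^ k) by (apply pow_le; lra).
    assert (Hd : (ffr y (S k) - ffr (y - s) (S k)) * (y - INR (S k)) <= INR (S k) * s * y ^ k * y).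
    { apply Rle_trans with (INR (S k) * s * y ^ k * (y - INR (S k))).
      apply Rmult_le_compat_r; lra.
      apply Rmult_le_compat_l. apply Rmult_le_pos; [apply Rmult_le_pos|]; lra. lra. }
    assert (ffr (y - s) (S k) * s <= y ^ (S k) * s) by (apply Rmult_le_compat_r; lra).
    change (y ^ S k) with (y * y ^ k) in *. nra.
Qed.

Lemma pow_diff lam h k : 0 <= h <= lam -> lam ^ (S k) - (lam - h) ^ (S k) <= INR (S k) * h * lam ^ k.
Proof.
  intros Hh. induction k as [|k IH].
  - simpl. lra.
  - change (lam ^ S (S k)) with (lam * lam ^ S k).
    change ((lam - h) ^ S (S k)) with ((lam - h) * (lam - h) ^ S k).
    assert (0 <= (lam - h) ^ S k <= lam ^ S k) by (split; [apply pow_le|apply pow_incr]; lra).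
    assert (0 <= lam ^ k) by (apply pow_le; lra).
    rewrite (S_INR (S k)). change (lam ^ S k) with (lam * lam ^ k) in *.
    assert (lam * (lam * lam ^ k) - lam * (lam - h) ^ S k <= lam * (INR (S k) * h * lam ^ k)) by (apply (Rmult_le_compat_l lam) in IH; lra).
    assert (h * (lam - h) ^ S k <= h * (lam * lam^k)) by (apply Rmult_le_compat_l; lra).
    nra.
Qed.

Lemma one_minus_pow x k : 0 <= x <= 1 -> INR (S k) * x * (1 - x) ^ k <= 1 - (1 - x) ^ (S k).
Proof.
  intros Hx. induction k as [|k IH].
  - simpl. lra.
  - change ((1-x) ^ S (S k)) with ((1-x) * (1-x) ^ S k).
    assert (0 <= (1-x)^k <= 1).
    { split. apply pow_le; lra. assert (Hp : (1-x)^k <= 1^k) by (apply pow_incr; lra). rewrite pow1 in Hp. exact Hp. }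
    change ((1-x) ^ S k) with ((1-x) * (1-x) ^ k) in *.
    rewrite (S_INR (S k)). nra.
Qed.

Lemma bpow_lower x n : 0 <= x <= 1 -> exp (- (INR n * x)) * (1 - INR n * x^2) <= (1 - x) ^ n.
Proof.
  intros Hx.
  assert (Hb : exp (-x) * (1 - x^2) <= 1 - x).
  { pose proof (exp_ineq1_le x). assert (exp x * exp (-x) = 1) by (rewrite <- exp_plus; replace (x + -x) with 0 by ring; apply exp_0).
    pose proof (exp_pos (-x)). nra. }
  assert (H1 : (exp (-x) * (1 - x^2)) ^ n <= (1-x)^n).
  { apply pow_incr. split; [|exact Hb]. apply Rmult_le_pos. left; apply exp_pos. nra. }
  rewrite Rpow_mult_distr, exp_pow_n in H1.
  pose proof (bernoulli (x^2) n ltac:(nra)).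
  replace (INR n * - x) with (- (INR n * x)) in H1 by ring.
  pose proof (exp_pos (- (INR n * x))). nra.
Qed.

Lemma exp_small t : 0 <= t <= 1/2 -> exp t <= 1 + 2 * t.
Proof.
  intros Ht. pose proof (exp_ineq1_le (-t)).
  assert (exp t * exp (-t) = 1) by (rewrite <- exp_plus; replace (t + -t) with 0 by ring; apply exp_0).
  pose proof (exp_pos t). nra.
Qed.

Lemma pow_le_one a k : 0 <= a <= 1 -> 0 <= a ^ k <= 1.
Proof. intros H. split. apply pow_le; lra. assert (Hp : a^k <= 1^k) by (apply pow_incr; lra). rewrite pow1 in Hp. exact Hp. Qed.

Lemma core d1 E x F1 F2 :
  (1 <= d1)%nat -> 0 < x ->
  let d := S d1 in let dr := INR d in
  let y := INR E + 3 * dr + 2 in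
  let K := 20 * dr^3 * (INR d1 ^ d1 + (dr + 1) ^ (S d)) in
  x * (3 * dr + 2) <= 1/2 -> x * K <= 0.05 ->
  F1 - F2 <= dr * dr * y ^ d1 -> (y - 2*dr) ^ d <= F2 -> F2 <= y ^ d ->
  let b := 1 - x in
  let D := INR (fact d) in
  / x * (F1 / D) * x ^ d * (b ^ E * b ^ (2*d1+4))
   - (/ x - 1) * (F2 / D) * x ^ d * (1 - 2*x) ^ (E + d1 + 3) / (b ^ E * b ^ (2*d1+4)) <= 0.95.
Proof.
  intros Hd1 Hx d dr y K Hx1 HxK HF12 HF2l HF2u b D.
  assert (Hdr : 2 <= dr) by (unfold dr, d; rewrite S_INR; apply (le_INR 1) in Hd1; simpl in Hd1; lra).
  assert (Hdr1 : dr = INR d1 + 1) by (unfold dr, d; apply S_INR).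
  assert (HE0 : 0 <= INR E) by apply pos_INR.
  assert (Hy : 3 * dr + 2 <= y) by (unfold y; lra).
  assert (Hxs : x <= 1/16) by nra.
  assert (Hb : 15/16 <= b < 1) by (unfold b; lra).
  assert (HD : 1 <= D) by (unfold D; apply (le_INR 1); apply lt_O_fact).
  set (P := b ^ E). set (B1 := b ^ (2*d1)).
  assert (HP : 0 < P <= 1) by (split; [apply pow_lt; lra| apply pow_le_one; lra]).
  assert (HB1 : 0 < B1 <= 1) by (split; [apply pow_lt; lra| apply pow_le_one; lra]).
  assert (Hb4 : b ^ (2*d1+4) = B1 * b^4) by (unfold B1; apply pow_add).
  rewrite Hb4.
  set (N := (E + d1 + 3)%nat).
  assert (HN : INR N = y - 2 * dr) by (unfold N, y; rewrite !plus_INR, Hdr1; simpl; ring).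
  assert (S1 : P*P*B1*b^6 - INR N * x^2 * P*P*B1*b^4 <= (1 - 2*x) ^ N).
  { assert (Hbb : (b^2) ^ N = P*P*B1*b^6).
    { rewrite <- pow_mult. replace (2 * N)%nat with (E + E + 2*d1 + 6)%nat by (unfold N; lia).
      rewrite !pow_add. unfold P, B1. ring. }
    assert (H12 : 1 - 2*x = b^2 * (1 - x^2/b^2)) by (unfold b; field; lra).
    rewrite H12, Rpow_mult_distr, Hbb.
    pose proof (bernoulli (x^2/b^2) N) as Hbe.
    assert (x^2/b^2 <= 1) by (apply Rmult_le_reg_l with (b^2); [nra|]; field_simplify; nra).
    specialize (Hbe H).
    assert (0 <= P*P*B1*b^6) by (apply Rmult_le_pos; [|apply pow_le]; nra).
    apply Rle_trans with (P*P*B1*b^6 * (1 - INR N * (x^2/b^2))).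
    right. field. lra.
    apply Rmult_le_compat_l; lra. }
  set (Q := (1 - 2*x) ^ N / (P * (B1 * b^4))).
  assert (HPB : 0 < P * (B1 * b^4)) by (apply Rmult_lt_0_compat; [lra|apply Rmult_lt_0_compat;[lra|apply pow_lt; lra]]).
  assert (S2 : P*b^2 - INR N * x^2 * P <= Q).
  { assert (HQ : P * (B1 * b^4) * Q = (1 - 2*x) ^ N) by (unfold Q; field; lra).
    apply Rmult_le_reg_l with (P * (B1 * b^4)); [exact HPB|]. rewrite HQ.
    replace (P * (B1 * b ^ 4) * (P * b ^ 2 - INR N * x ^ 2 * P)) with
      (P*P*B1*b^6 - INR N * x^2 * P*P*B1*b^4) by ring. exact S1. }
  assert (Hc : 0 <= (/ x - 1) * (F2 / D) * x ^ d).
  { assert (0 <= F2) by (pose proof (pow_le (y - 2*dr) d ltac:(lra)); lra).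
    apply Rmult_le_pos; [apply Rmult_le_pos|apply pow_le; lra].
    assert (1 <= / x) by (apply Rmult_le_reg_l with x; [lra|]; rewrite Rinv_r; lra). lra.
    apply Rmult_le_pos; [lra| left; apply Rinv_0_lt_compat; lra]. }
  replace ((/ x - 1) * (F2 / D) * x ^ d * (1 - 2 * x) ^ N / (P * (B1 * b ^ 4)))
    with ((/ x - 1) * (F2 / D) * x ^ d * Q) by (unfold Q, Rdiv; ring).
  assert (S3 : / x * (F1 / D) * x ^ d * (P * (B1 * b ^ 4)) - (/ x - 1) * (F2 / D) * x ^ d * Q
     <= (x ^ d1 * P / D) * (F1 * B1 * b^4 - F2 * b^3 + F2 * INR N * x^2 * b)).
  { apply Rle_trans with (/ x * (F1 / D) * x ^ d * (P * (B1 * b ^ 4)) - (/ x - 1) * (F2 / D) * x ^ d * (P*b^2 - INR N * x^2 * P)).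
    { assert ((/ x - 1) * (F2 / D) * x ^ d * (P*b^2 - INR N * x^2 * P) <= (/ x - 1) * (F2 / D) * x ^ d * Q)
        by (apply Rmult_le_compat_l; assumption). lra. }
    right. unfold d, b. simpl pow. field. lra. }
  eapply Rle_trans; [exact S3|]. clear S3 S1 S2 Hc.
  assert (H5 : INR (S (2*d1)) * x * B1 <= 1 - b * B1).
  { pose proof (one_minus_pow x (2*d1) ltac:(lra)). fold b in H. unfold B1. simpl in H |- *. lra. }
  assert (HS2 : INR (S (2*d1)) = 2 * dr - 1) by (rewrite S_INR, mult_INR, Hdr1; simpl; ring).
  rewrite HS2 in H5.
  assert (HF2 : 0 <= F2) by (pose proof (pow_le (y - 2*dr) d ltac:(lra)); lra).
  set (W := x ^ d1 * P / D).
  assert (HW : 0 <= W) by (unfold W; apply Rmult_le_pos; [apply Rmult_le_pos; [apply pow_le; lra|lra]| left; apply Rinv_0_lt_compat; lra]).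
  set (lam := x * y).
  assert (Hlam : 0 <= lam) by (unfold lam; nra).
  assert (T1 : W * ((F1 - F2) * B1 * b^4) <= dr * dr * lam ^ d1 * P / D).
  { assert (0 <= B1 * b^4 <= 1) by (split; [apply Rmult_le_pos; [lra|apply pow_le; lra] | pose proof (pow_le_one b 4 ltac:(lra)); nra]).
    assert (0 <= y ^ d1) by (apply pow_le; lra).
    assert ((F1 - F2) * (B1 * b^4) <= dr * dr * y ^ d1).
    { apply Rle_trans with (dr * dr * y ^ d1 * (B1 * b^4)). apply Rmult_le_compat_r; lra.
      assert (0 <= dr*dr*y^d1) by (apply Rmult_le_pos; nra). nra. }
    apply Rle_trans with (W * (dr * dr * y ^ d1)).
    { replace ((F1 - F2) * B1 * b^4) with ((F1 - F2) * (B1 * b^4)) by ring. apply Rmult_le_compat_l; lra. }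
    right. unfold W, lam. rewrite Rpow_mult_distr. field. lra. }
  assert (T3 : W * (F2 * INR N * x^2 * b) <= lam ^ (S d) * P / D).
  { assert (F2 * INR N * b <= y ^ d * y).
    { rewrite HN. assert (0 <= y^d) by (apply pow_le; lra). 
      assert (F2 * (y - 2*dr) <= y^d * y) by (apply Rmult_le_compat; lra).
      assert (0 <= F2 * (y - 2*dr)) by (apply Rmult_le_pos; lra). nra. }
    apply Rle_trans with (W * (y ^ d * y * x^2)).
    { replace (F2 * INR N * x^2 * b) with ((F2 * INR N * b) * x^2) by ring.
      apply Rmult_le_compat_l; [lra|]. apply Rmult_le_compat_r; [nra|lra]. }
    right. unfold W, lam. rewrite Rpow_mult_distr. unfold d. simpl pow. field. lra. }
  set (Z := P * B1 * b^3).
  assert (T2 : (lam - 2 * dr * x) ^ d * Z / D <= W * (x * F2 * B1 * b^3)).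
  { assert (HZ : 0 <= Z) by (unfold Z; apply Rmult_le_pos; [nra|apply pow_le; lra]).
    replace (W * (x * F2 * B1 * b^3)) with (x ^ d * F2 * Z / D) by (unfold W, Z, d; simpl pow; field; lra).
    replace (lam - 2 * dr * x) with (x * (y - 2*dr)) by (unfold lam; ring).
    rewrite Rpow_mult_distr. unfold Rdiv. apply Rmult_le_compat_r. left; apply Rinv_0_lt_compat; lra.
    rewrite !Rmult_assoc. apply Rmult_le_compat_l. apply pow_le; lra. apply Rmult_le_compat_r; lra. }
  assert (Hmain : W * (F1 * B1 * b ^ 4 - F2 * b ^ 3 + F2 * INR N * x ^ 2 * b)
     <= dr * dr * lam ^ d1 * P / D - (2*dr - 1) * ((lam - 2 * dr * x) ^ d * Z / D) + lam ^ (S d) * P / D).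
  { assert (F1 * B1 * b ^ 4 - F2 * b ^ 3 <= (F1 - F2) * B1 * b^4 - (2*dr - 1) * (x * F2 * B1 * b^3)).
    { assert (0 <= F2 * b^3) by (apply Rmult_le_pos; [lra|apply pow_le; lra]).
      assert (F2 * b^3 * (b * B1) <= F2 * b^3 * (1 - (2*dr - 1) * x * B1)) by (apply Rmult_le_compat_l; lra).
      simpl pow in *. nra. }
    assert (W * (F1 * B1 * b ^ 4 - F2 * b ^ 3) <= W * ((F1 - F2) * B1 * b^4 - (2*dr - 1) * (x * F2 * B1 * b^3)))
      by (apply Rmult_le_compat_l; lra).
    assert ((2*dr-1) * ((lam - 2 * dr * x) ^ d * Z / D) <= (2*dr-1) * (W * (x * F2 * B1 * b^3))) by (apply Rmult_le_compat_l; lra).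
    nra. }
  eapply Rle_trans; [exact Hmain|]. clear Hmain T1 T2 T3.
  set (ex := exp (- lam)).
  assert (Hex : 0 < ex) by apply exp_pos.
  set (beta := exp (x * (3 * dr + 2))).
  assert (HP2 : P <= ex * beta).
  { unfold P, ex, beta. rewrite <- exp_plus. eapply Rle_trans. apply pow_le_exp. lra.
    apply exp_le_mono. unfold lam, y. lra. }
  assert (Hbeta : beta <= 1 + 2 * (x * (3*dr+2))) by (apply exp_small; nra).
  set (n := (E + 3 * d1 + 5)%nat).
  assert (Hn : INR n = y) by (unfold n, y; rewrite !plus_INR, mult_INR, Hdr1; simpl; ring).
  assert (HZ : ex * (1 - lam * x) <= Z).
  { pose proof (bpow_lower x n ltac:(lra)) as Hl. rewrite Hn in Hl. fold b in Hl.
    replace (- (y * x)) with (- lam) in Hl by (unfold lam; ring). fold ex in Hl.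
    replace (1 - y * x^2) with (1 - lam * x) in Hl by (unfold lam; ring).
    eapply Rle_trans; [exact Hl|].
    replace n with ((E + 2*d1 + 3) + (d1 + 2))%nat by (unfold n; lia).
    rewrite pow_add. unfold Z, P, B1.
    replace (b ^ (E + 2*d1 + 3)) with (b ^ E * b ^ (2 * d1) * b ^ 3) by (rewrite !pow_add; ring).
    pose proof (pow_le_one b (d1+2) ltac:(lra)).
    assert (0 <= b ^ E * b ^ (2 * d1) * b ^ 3) by (apply Rmult_le_pos; [apply Rmult_le_pos|]; apply pow_le; lra).
    nra. }
  set (h := 2 * dr * x).
  assert (Hh : 0 <= h <= lam) by (unfold h, lam; split; nra).
  assert (Hpd : lam ^ d - (lam - h) ^ d <= dr * h * lam ^ d1) by (apply pow_diff; exact Hh).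
  assert (Hlh : 0 <= (lam - h) ^ d <= lam ^ d) by (split; [apply pow_le| apply pow_incr]; lra).
  assert (Hld1 : 0 <= lam ^ d1) by (apply pow_le; lra).
  assert (HlSd : 0 <= lam ^ S d) by (apply pow_le; lra).
  assert (HlSd' : lam ^ S d = lam * lam ^ d) by reflexivity.
  assert (Hld : lam ^ d = lam * lam ^ d1) by reflexivity.
  assert (HZ2 : ex * (lam ^ d - dr * h * lam ^ d1 - x * lam ^ S d) <= (lam - h) ^ d * Z).
  { apply Rle_trans with ((lam - h) ^ d * (ex * (1 - lam * x))).
    2:{ apply Rmult_le_compat_l; lra. }
    assert ((lam - h)^d * (lam * x) <= lam^d * (lam * x)) by (apply Rmult_le_compat_r; nra).
    assert (ex * (lam ^ d - dr * h * lam ^ d1) <= ex * (lam - h)^d) by (apply Rmult_le_compat_l; lra).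
    rewrite HlSd'. nra. }
  assert (HPl1 : dr * dr * lam ^ d1 * P <= dr * dr * lam ^ d1 * (ex * beta)) by (apply Rmult_le_compat_l; [nra|lra]).
  assert (HPl2 : lam ^ S d * P <= lam ^ S d * (ex * beta)) by (apply Rmult_le_compat_l; lra).
  assert (HZ3 : (2*dr - 1) * (ex * (lam ^ d - dr * h * lam ^ d1 - x * lam ^ S d)) <= (2*dr-1) * ((lam - h) ^ d * Z))
    by (apply Rmult_le_compat_l; lra).
  pose proof (G_bound d1 lam Hd1 Hlam) as HG. fold d dr D in HG. fold ex in HG.
  assert (HA1 : ex * lam ^ d1 <= INR d1 ^ d1).
  { pose proof (exp_minus_poly lam 1 d1 Hlam ltac:(lra)) as H. rewrite Rmult_1_l in H. unfold Rdiv in H. rewrite Rinv_1, Rmult_1_r in H. exact H. }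
  assert (HA2 : ex * lam ^ S d <= (dr + 1) ^ S d).
  { pose proof (exp_minus_poly lam 1 (S d) Hlam ltac:(lra)) as H. rewrite Rmult_1_l in H. unfold Rdiv in H. rewrite Rinv_1, Rmult_1_r in H.
    rewrite S_INR in H. exact H. }
  assert (HA1p : 0 <= INR d1 ^ d1) by (apply pow_le, pos_INR).
  assert (HA2p : 0 <= (dr + 1) ^ S d) by (apply pow_le; lra).
  set (A1 := INR d1 ^ d1) in *. set (A2 := (dr + 1) ^ S d) in *.
  assert (Hb1 : 0 <= beta - 1 <= 2 * x * (3*dr+2)) by (split; [unfold beta; pose proof (exp_ineq1_le (x*(3*dr+2))); nra| lra]).
  assert (Herr : ex * ((beta - 1) * (dr * dr * lam ^ d1) + (beta - 1) * lam ^ S d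
                  + (2*dr - 1) * (dr * h * lam ^ d1 + x * lam ^ S d)) <= x * K).
  { set (L1 := ex * lam ^ d1) in *. set (L2 := ex * lam ^ S d) in *.
    assert (0 <= L1) by (unfold L1; nra). assert (0 <= L2) by (unfold L2; nra).
    replace (ex * ((beta - 1) * (dr * dr * lam ^ d1) + (beta - 1) * lam ^ S d
                  + (2*dr - 1) * (dr * h * lam ^ d1 + x * lam ^ S d)))
      with ((beta - 1) * dr * dr * L1 + (beta - 1) * L2 + (2*dr-1) * dr * (2*dr*x) * L1 + (2*dr-1) * x * L2)
      by (unfold L1, L2, h; ring).
    assert ((beta - 1) * dr * dr * L1 <= 2 * x * (3*dr+2) * dr * dr * A1).
    { apply Rmult_le_compat; try nra. }
    assert ((beta - 1) * L2 <= 2 * x * (3*dr+2) * A2) by (apply Rmult_le_compat; nra).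
    assert (0 <= (2*dr-1) * dr * (2*dr*x)) by (apply Rmult_le_pos; [apply Rmult_le_pos|]; nra).
    assert ((2*dr-1) * dr * (2*dr*x) * L1 <= (2*dr-1) * dr * (2*dr*x) * A1) by (apply Rmult_le_compat_l; lra).
    assert ((2*dr-1) * x * L2 <= (2*dr-1) * x * A2) by (apply Rmult_le_compat_l; nra).
    unfold K. simpl pow.
    assert (x * A1 * (2*(3*dr+2)*dr*dr + (2*dr-1)*dr*2*dr) <= x * A1 * (20 * (dr*(dr*(dr*1))))).
    { apply Rmult_le_compat_l. nra. nra. }
    assert (x * A2 * (2*(3*dr+2) + (2*dr-1)) <= x * A2 * (20 * (dr*(dr*(dr*1))))).
    { apply Rmult_le_compat_l. nra. nra. }
    nra. }
  assert (Hfin : dr * dr * lam ^ d1 * P / D - (2 * dr - 1) * ((lam - 2 * dr * x) ^ d * Z / D) + lam ^ S d * P / D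
     <= (0.9 * D + x * K) / D).
  { fold h. 
    replace (dr * dr * lam ^ d1 * P / D - (2 * dr - 1) * ((lam - h) ^ d * Z / D) + lam ^ S d * P / D)
      with ((dr * dr * lam ^ d1 * P - (2 * dr - 1) * ((lam - h) ^ d * Z) + lam ^ S d * P) / D) by (field; lra).
    unfold Rdiv. apply Rmult_le_compat_r. left; apply Rinv_0_lt_compat; lra.
    replace (dr^2) with (dr*dr) in HG by ring. nra. }
  eapply Rle_trans; [exact Hfin|].
  apply Rmult_le_reg_l with D; [lra|]. field_simplify; [|lra].
  assert (0 <= x * K) by (unfold K; apply Rmult_le_pos; [lra| apply Rmult_le_pos; [apply Rmult_le_pos; [lra|apply pow_le; lra]|lra]]).
  nra.
Qed.

Lemma binom_le n d : (d <= n)%nat -> 0 <= binomR n d <= INR n ^ d.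
Proof.
  intros H. rewrite binomR_ffr by exact H.
  destruct (ffr_bounds (INR n) d (le_INR _ _ H)) as [[H1 H2] _].
  assert (1 <= INR (fact d)) by (apply (le_INR 1); apply lt_O_fact).
  split. apply Rmult_le_pos; [lra| left; apply Rinv_0_lt_compat; lra].
  apply Rle_trans with (ffr (INR n) d); [|exact H2].
  apply Rmult_le_reg_l with (INR (fact d)); [lra|]. field_simplify; [|lra]. nra.
Qed.

Lemma upperN d n m : (1 <= d)%nat -> (d <= n)%nat -> (2 <= m)%nat ->
  sigma2 d n m <= INR n ^ d + INR n ^ (2 * d).
Proof.
  intros Hd Hn Hm. unfold sigma2.
  set (mr := INR m). set (x := / mr). set (y := INR n).
  assert (Hmr : 2 <= mr) by (unfold mr; apply (le_INR 2) in Hm; simpl in Hm; lra).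
  assert (Hx : 0 < x <= 1/2) by (unfold x; split; [apply Rinv_0_lt_compat; lra| apply Rmult_le_reg_l with mr; [lra|]; rewrite Rinv_r; lra]).
  assert (Hmx : mr * x = 1) by (unfold x; field; lra).
  assert (Hy : 0 <= y) by apply pos_INR.
  assert (Hmu : mu d n m <= y ^ d).
  { unfold mu. fold mr x. destruct (binom_le n d Hn) as [B1 B2]. fold y in B2.
    destruct (pow_le_one (1 - x) (n - d) ltac:(lra)).
    destruct (pow_le_one x (d - 1) ltac:(lra)).
    assert (mr * x ^ d = x ^ (d-1)) by (replace d with (S (d-1)) at 1 by lia; simpl; rewrite <- Rmult_assoc, Hmx; ring).
    assert (0 <= y^d) by (apply pow_le; lra). assert (0 <= x ^ d) by (apply pow_le; lra).
    assert (mr * binomR n d * x ^ d <= y ^ d).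
    { replace (mr * binomR n d * x ^ d) with (binomR n d * (mr * x ^ d)) by ring. nra. }
    assert (0 <= mr * binomR n d * x ^ d) by (apply Rmult_le_pos; [apply Rmult_le_pos|]; lra).
    nra. }
  assert (HP2 : mr * (mr - 1) * multi2R n d * x ^ (2 * d) * (1 - 2 / mr) ^ (n - 2 * d) <= y ^ (2*d)).
  { destruct (le_lt_dec (2*d) n) as [H2|H2].
    - rewrite multi2R_eq by exact H2.
      destruct (binom_le n d Hn) as [B1 B2]. destruct (binom_le (n-d) d ltac:(lia)) as [B3 B4].
      rewrite minus_INR in B4 by lia. fold y in B2, B4.
      assert ((y - INR d)^d <= y^d) by (apply pow_incr; pose proof (le_INR _ _ Hn) as Hl; pose proof (pos_INR d); fold y in Hl; lra).
      replace (2 / mr) with (2 * x) by (unfold x, Rdiv; ring).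
      destruct (pow_le_one (1 - 2*x) (n - 2*d) ltac:(lra)).
      assert (mr * mr * x ^ (2*d) = x ^ (2*d - 2)).
      { assert (Hxx : x^(2*d) = x^2 * x^(2*d-2)) by (rewrite <- pow_add; f_equal; lia).
        rewrite Hxx. replace (mr * mr * (x ^ 2 * x ^ (2 * d - 2))) with ((mr*x)*(mr*x)*x ^ (2*d-2)) by ring. rewrite Hmx. ring. }
      destruct (pow_le_one x (2*d-2) ltac:(lra)).
      assert (y ^ (2*d) = y^d * y^d) by (rewrite <- pow_add; f_equal; lia).
      assert (0 <= y^d) by (apply pow_le; lra).
      assert (binomR n d * binomR (n-d) d <= y^d * y^d) by (apply Rmult_le_compat; lra).
      assert (0 <= binomR n d * binomR (n-d) d) by (apply Rmult_le_pos; lra).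
      assert (0 <= x ^ (2*d)) by (apply pow_le; lra).
      assert (mr * (mr-1) * x^(2*d) <= x^(2*d-2)).
      { assert (mr * (mr-1) * x^(2*d) <= mr*mr*x^(2*d)) by (apply Rmult_le_compat_r; [lra| nra]). lra. }
      assert (0 <= mr * (mr-1) * x^(2*d)) by (apply Rmult_le_pos; [nra|lra]).
      replace (mr * (mr - 1) * (binomR n d * binomR (n - d) d) * x ^ (2 * d) * (1 - 2 * x) ^ (n - 2 * d))
        with ((binomR n d * binomR (n - d) d) * (mr * (mr - 1) * x ^ (2 * d)) * (1 - 2 * x) ^ (n - 2 * d)) by ring.
      assert ((binomR n d * binomR (n - d) d) * (mr * (mr - 1) * x ^ (2 * d)) <= y^(2*d)).
      { rewrite H6. apply Rle_trans with ((y^d*y^d) * 1). apply Rmult_le_compat; lra. lra. }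
      assert (0 <= (binomR n d * binomR (n - d) d) * (mr * (mr - 1) * x ^ (2 * d))) by (apply Rmult_le_pos; lra).
      nra.
    - rewrite multi2R_zero by exact H2. rewrite Rmult_0_r, !Rmult_0_l. apply pow_le; lra. }
  fold x. pose proof (pow2_ge_0 (mu d n m)). lra.
Qed.

Lemma upperQ d n m : (1 <= d)%nat -> (2 * d <= n)%nat -> (2 <= m)%nat ->
  let mr := INR m in let lam := INR n / mr in
  let Q := mr * lam ^ d * exp (- lam) in
  sigma2 d n m <= exp (INR d) * Q + exp (2 * INR d) * Q ^ 2.
Proof.
  intros Hd Hn Hm mr lam Q. unfold sigma2.
  set (x := / mr). set (y := INR n). set (dr := INR d).
  assert (Hmr : 2 <= mr) by (unfold mr; apply (le_INR 2) in Hm; simpl in Hm; lra).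
  assert (Hx : 0 < x <= 1/2) by (unfold x; split; [apply Rinv_0_lt_compat; lra| apply Rmult_le_reg_l with mr; [lra|]; rewrite Rinv_r; lra]).
  assert (Hmx : mr * x = 1) by (unfold x; field; lra).
  assert (Hy : 0 <= y) by apply pos_INR.
  assert (Hlam : lam = y * x) by reflexivity.
  assert (Hlam0 : 0 <= lam) by nra.
  assert (Hdr : 0 <= dr) by apply pos_INR.
  assert (HyD : 2 * dr <= y) by (unfold y, dr; apply le_INR in Hn; rewrite mult_INR in Hn; simpl in Hn; lra).
  assert (HQ0 : 0 <= Q) by (unfold Q; apply Rmult_le_pos; [apply Rmult_le_pos; [lra|apply pow_le; lra]|left; apply exp_pos]).
  assert (Hmu : mu d n m <= exp dr * Q).
  { unfold mu. fold mr x. destruct (binom_le n d ltac:(lia)) as [B1 B2]. fold y in B2.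
    assert (Hb : (1 - x) ^ (n - d) <= exp (- lam) * exp dr).
    { eapply Rle_trans. apply pow_le_exp. lra. rewrite <- exp_plus. apply exp_le_mono.
      rewrite minus_INR by lia. fold y dr. rewrite Hlam. nra. }
    assert (0 <= (1 - x) ^ (n - d)) by (apply pow_le; lra).
    assert (0 <= x^d) by (apply pow_le; lra).
    assert (mr * binomR n d * x ^ d <= mr * lam ^ d).
    { rewrite Hlam, Rpow_mult_distr. rewrite Rmult_assoc. apply Rmult_le_compat_l. lra.
      apply Rmult_le_compat_r; lra. }
    assert (0 <= mr * binomR n d * x ^ d) by (apply Rmult_le_pos; [apply Rmult_le_pos|]; lra).
    apply Rle_trans with (mr * lam ^ d * (exp (- lam) * exp dr)).
    apply Rmult_le_compat; lra. unfold Q. right; ring. }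
  assert (HP2 : mr * (mr - 1) * multi2R n d * x ^ (2 * d) * (1 - 2 / mr) ^ (n - 2 * d) <= exp (2 * dr) * Q ^ 2).
  { rewrite multi2R_eq by exact Hn.
    destruct (binom_le n d ltac:(lia)) as [B1 B2]. destruct (binom_le (n-d) d ltac:(lia)) as [B3 B4].
    rewrite minus_INR in B4 by lia. fold y dr in B2, B4.
    assert ((y - dr)^d <= y^d) by (apply pow_incr; lra).
    replace (2 / mr) with (2 * x) by (unfold x, Rdiv; ring).
    assert (Hb : (1 - 2*x) ^ (n - 2*d) <= exp (- lam) * exp (- lam) * exp (2*dr)).
    { eapply Rle_trans. apply pow_le_exp. lra. rewrite <- !exp_plus. apply exp_le_mono.
      rewrite minus_INR by lia. rewrite mult_INR. fold y dr. rewrite Hlam. simpl INR. nra. }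
    assert (0 <= (1 - 2*x) ^ (n - 2*d)) by (apply pow_le; lra).
    assert (0 <= y^d) by (apply pow_le; lra).
    assert (HBB : binomR n d * binomR (n-d) d <= y^d * y^d) by (apply Rmult_le_compat; lra).
    assert (0 <= binomR n d * binomR (n-d) d) by (apply Rmult_le_pos; lra).
    assert (0 <= x ^ (2*d)) by (apply pow_le; lra).
    assert (Hx2 : x ^ (2*d) = x^d * x^d) by (rewrite <- pow_add; f_equal; lia).
    assert (0 <= mr * (mr-1)) by nra.
    apply Rle_trans with (mr * mr * (y^d*y^d) * x^(2*d) * (exp (- lam) * exp (- lam) * exp (2*dr))).
    { apply Rmult_le_compat; try lra. apply Rmult_le_pos; [apply Rmult_le_pos|]; lra.
      apply Rmult_le_compat; try lra. apply Rmult_le_pos; lra.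
      apply Rmult_le_compat; nra. }
    right. unfold Q. rewrite Hlam, Hx2, Rpow_mult_distr. simpl pow. rewrite Rpow_mult_distr. ring. }
  change (INR m) with mr. fold x. pose proof (pow2_ge_0 (mu d n m)). lra.
Qed.

Lemma mainC d1 n m : (1 <= d1)%nat -> (3 * S d1 + 2 <= n)%nat -> (2 <= m)%nat ->
  let dr := INR (S d1) in
  let K := 20 * dr^3 * (INR d1 ^ d1 + (dr + 1) ^ (S (S d1))) in
  20 * K + 2 * (3 * dr + 2) <= INR m ->
  mu (S d1) n m <= 20 * sigma2 (S d1) n m.
Proof.
  intros Hd1 Hn Hm dr K HM.
  set (d := S d1) in *.
  set (E := (n - (3 * d + 2))%nat).
  assert (HnE : n = (E + 3 * d + 2)%nat) by (unfold E; lia).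
  set (mr := INR m) in *. set (x := / mr). set (b := 1 - x). set (y := INR n).
  assert (Hdr : 2 <= dr) by (unfold dr, d; rewrite S_INR; apply (le_INR 1) in Hd1; simpl in Hd1; lra).
  assert (HK : 0 <= K).
  { unfold K. apply Rmult_le_pos. apply Rmult_le_pos. lra. apply pow_le; lra.
    apply Rplus_le_le_0_compat; apply pow_le; [apply pos_INR| lra]. }
  assert (Hmr : 2 <= mr) by (unfold mr; apply (le_INR 2) in Hm; simpl in Hm; lra).
  assert (Hx : 0 < x) by (unfold x; apply Rinv_0_lt_compat; lra).
  assert (Hmx : mr * x = 1) by (unfold x; field; lra).
  assert (Hx1 : x * (3 * dr + 2) <= 1/2).
  { apply Rmult_le_reg_l with mr; [lra|]. rewrite <- Rmult_assoc, Hmx. lra. }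
  assert (HxK : x * K <= 0.05).
  { apply Rmult_le_reg_l with mr; [lra|]. rewrite <- Rmult_assoc, Hmx. lra. }
  assert (Hy : y = INR E + 3 * dr + 2).
  { unfold y, dr. rewrite HnE, !plus_INR, mult_INR. fold d. simpl (INR 3). simpl (INR 2). ring. }
  pose proof (pos_INR E) as HE0.
  set (F1 := ffr y d). set (F2 := ffr (y - dr) d).
  assert (HF12 : F1 - F2 <= dr * dr * y ^ d1).
  { unfold F1, F2, d. pose proof (ffr_diff y dr d1 ltac:(lra) ltac:(change (INR (S d1)) with dr; lra)) as H. change (INR (S d1)) with dr in H. lra. }
  destruct (ffr_bounds (y - dr) d ltac:(change (INR d) with dr; lra)) as [[HF2a HF2b] HF2c].
  assert (HF2l : (y - 2*dr) ^ d <= F2) by (replace (y - 2*dr) with (y - dr - INR d) by (fold dr; ring); exact HF2c).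
  assert (HF2u : F2 <= y ^ d) by (eapply Rle_trans; [exact HF2b| apply pow_incr; lra]).
  pose proof (core d1 E x F1 F2 Hd1 Hx) as Hc. cbv zeta in Hc. fold d dr in Hc. fold K in Hc.
  rewrite <- Hy in Hc. specialize (Hc Hx1 HxK HF12 HF2l HF2u). fold b in Hc.
  set (D := INR (fact d)) in *.
  assert (HD : 1 <= D) by (unfold D; apply (le_INR 1); apply lt_O_fact).
  set (Bn := b ^ E * b ^ (2*d1+4)) in *.
  assert (HBn : 0 < Bn) by (unfold Bn; apply Rmult_lt_0_compat; apply pow_lt; unfold b; assert (x <= 1/2) by nra; lra).
  set (Tt := / x * (F1 / D) * x ^ d * Bn - (/ x - 1) * (F2 / D) * x ^ d * (1 - 2 * x) ^ (E + d1 + 3) / Bn) in Hc.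
  assert (Hmu : mu d n m = / x * (F1 / D) * x ^ d * Bn).
  { unfold mu. rewrite binomR_ffr by lia. fold y F1 D mr x b.
    replace (n - d)%nat with (E + (2*d1+4))%nat by (unfold d in *; lia). rewrite pow_add. fold Bn.
    replace mr with (/x) by (unfold x; field; lra). ring. }
  assert (Hsig : sigma2 d n m = mu d n m * (1 - Tt)).
  { unfold sigma2. rewrite Hmu.
    rewrite multi2R_eq by lia. rewrite binomR_ffr by lia. rewrite (binomR_ffr (n-d) d) by lia.
    rewrite minus_INR by lia. fold y F1 D mr x. fold dr F2.
    replace (2 / mr) with (2 * x) by (unfold x, Rdiv; ring).
    replace (n - 2*d)%nat with (E + d1 + 3)%nat by (unfold d in *; lia).
    replace (x ^ (2*d)) with (x ^ d * x ^ d) by (rewrite <- pow_add; f_equal; lia).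
    replace mr with (/x) by (unfold x; field; lra).
    unfold Tt. field. split; lra. }
  assert (0 <= mu d n m).
  { rewrite Hmu. apply Rmult_le_pos; [|lra]. apply Rmult_le_pos; [|apply pow_le; lra].
    apply Rmult_le_pos. left; apply Rinv_0_lt_compat; lra.
    destruct (ffr_bounds y d ltac:(fold dr; lra)) as [[? ?] ?]. fold F1 in H. 
    apply Rmult_le_pos; [lra| left; apply Rinv_0_lt_compat; lra]. }
  rewrite Hsig. nra.
Qed.

Theorem lemma3p1 (d : nat) (hd : (2 <= d)%nat) :
  forall (nstar mstar eps : R), 0 < eps ->
  exists r1 C : R, 0 < r1 /\ 0 < C /\
    forall n m : nat, (d <= n)%nat -> (2 <= m)%nat ->
      r1 <= sigma2 d n m ->
      (nstar < INR n /\ mstar < INR m) /\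
      INR n / INR m <= (1 + eps) * ln (INR m) /\
      mu d n m <= C * sigma2 d n m.
Proof.
  intros nstar mstar eps Heps.
  destruct d as [|d1]; [lia|]. assert (Hd1 : (1 <= d1)%nat) by lia.
  set (dr := INR (S d1)).
  assert (Hdr : 2 <= dr) by (unfold dr; rewrite S_INR; apply (le_INR 1) in Hd1; simpl in Hd1; lra).
  set (K := 20 * dr^3 * (INR d1 ^ d1 + (dr + 1) ^ (S (S d1)))).
  assert (HK : 0 <= K).
  { unfold K. apply Rmult_le_pos. apply Rmult_le_pos. lra. apply pow_le; lra.
    apply Rplus_le_le_0_compat; apply pow_le; [apply pos_INR| lra]. }
  set (M1 := 20 * K + 2 * (3 * dr + 2)).
  set (Y0 := Rabs nstar + 3 * dr + 2).
  set (M0 := Rabs mstar + M1 + 2).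
  set (QM := M0 * dr ^ (S d1)).
  set (c := eps / (1 + eps)).
  assert (Hc : 0 < c) by (unfold c; apply Rdiv_lt_0_compat; lra).
  set (QB := (dr / c) ^ (S d1)).
  set (B := fun q => exp dr * q + exp (2 * dr) * q ^ 2).
  assert (HY0 : 0 <= Y0) by (unfold Y0; pose proof (Rabs_pos nstar); lra).
  assert (HM0 : 0 <= M0) by (unfold M0, M1; pose proof (Rabs_pos mstar); lra).
  assert (HQM : 0 <= QM) by (unfold QM; apply Rmult_le_pos; [lra| apply pow_le; lra]).
  assert (HQB : 0 <= QB) by (unfold QB; apply pow_le; apply Rmult_le_pos; [lra| left; apply Rinv_0_lt_compat; lra]).
  assert (HBpos : forall q, 0 <= q -> 0 <= B q).
  { intros q Hq. unfold B. pose proof (exp_pos dr). pose proof (exp_pos (2*dr)). pose proof (pow2_ge_0 q). 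
    apply Rplus_le_le_0_compat; apply Rmult_le_pos; lra. }
  assert (HBmono : forall q q', 0 <= q <= q' -> B q <= B q').
  { intros q q' Hq. unfold B. pose proof (exp_pos dr). pose proof (exp_pos (2*dr)).
    assert (q^2 <= q'^2) by (apply pow_incr; lra).
    apply Rplus_le_compat; apply Rmult_le_compat_l; lra. }
  set (r1 := 1 + (Y0 ^ (S d1) + Y0 ^ (2 * S d1)) + B QM + B QB).
  assert (HY0p : 0 <= Y0 ^ (S d1) + Y0 ^ (2 * S d1)) by (apply Rplus_le_le_0_compat; apply pow_le; lra).
  pose proof (HBpos QM HQM). pose proof (HBpos QB HQB).
  exists r1, 20. split; [unfold r1; lra|]. split; [lra|].
  intros n m Hn Hm Hr.
  set (y := INR n). set (mr := INR m).
  assert (Hy0 : 0 <= y) by apply pos_INR.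
  assert (Hmr : 2 <= mr) by (unfold mr; apply (le_INR 2) in Hm; simpl in Hm; lra).
  assert (Hy : Y0 < y).
  { destruct (Rlt_le_dec Y0 y) as [Hh|Hh]; [exact Hh|].
    exfalso. pose proof (upperN (S d1) n m ltac:(lia) Hn Hm) as Hu. fold y in Hu.
    assert (y ^ (S d1) <= Y0 ^ (S d1)) by (apply pow_incr; lra).
    assert (y ^ (2 * S d1) <= Y0 ^ (2 * S d1)) by (apply pow_incr; lra).
    unfold r1 in Hr. lra. }
  assert (Hn3 : (3 * S d1 + 2 <= n)%nat).
  { assert (INR (3 * S d1 + 2) < INR n).
    { rewrite plus_INR, mult_INR. fold dr. simpl (INR 3). simpl (INR 2). fold y.
      unfold Y0 in Hy. pose proof (Rabs_pos nstar). lra. }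
    apply INR_lt in H1. lia. }
  assert (Hns : nstar < y) by (unfold Y0 in Hy; pose proof (Rle_abs nstar); pose proof (Rabs_pos nstar); lra).
  pose proof (upperQ (S d1) n m ltac:(lia) ltac:(lia) Hm) as HQ. cbv zeta in HQ.
  fold dr mr y in HQ.
  set (lam := y / mr) in *.
  assert (Hlam : 0 <= lam) by (unfold lam; apply Rmult_le_pos; [lra| left; apply Rinv_0_lt_compat; lra]).
  set (Q := mr * lam ^ S d1 * exp (- lam)) in *.
  change (exp dr * Q + exp (2 * dr) * Q ^ 2) with (B Q) in HQ.
  assert (HQ0 : 0 <= Q) by (unfold Q; apply Rmult_le_pos; [apply Rmult_le_pos; [lra|apply pow_le; lra]| left; apply exp_pos]).
  assert (Hm0 : M0 < mr).
  { destruct (Rlt_le_dec M0 mr) as [Hh|Hh]; [exact Hh|]. exfalso.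
    assert (Q <= QM).
    { unfold Q, QM. pose proof (exp_minus_poly lam 1 (S d1) Hlam ltac:(lra)) as Hp.
      rewrite Rmult_1_l in Hp. unfold Rdiv in Hp. rewrite Rinv_1, Rmult_1_r in Hp. fold dr in Hp.
      rewrite Rmult_assoc. apply Rmult_le_compat. lra.
      apply Rmult_le_pos; [apply pow_le; lra| left; apply exp_pos]. lra. rewrite Rmult_comm. exact Hp. }
    pose proof (HBmono Q QM (conj HQ0 H1)). unfold r1 in Hr. lra. }
  assert (Hms : mstar < mr) by (unfold M0 in Hm0; pose proof (Rle_abs mstar); unfold M1 in Hm0; lra).
  split; [split; assumption|].
  split.
  -
    fold y mr. fold lam.
    destruct (Rle_lt_dec lam ((1 + eps) * ln mr)) as [Hh|Hh]; [exact Hh|]. exfalso.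
    assert (Q <= QB).
    { assert (Hln : ln mr <= lam / (1 + eps)).
      { apply Rmult_le_reg_l with (1 + eps); [lra|]. field_simplify; lra. }
      assert (Hc2 : c * lam <= lam - ln mr).
      { unfold c. replace (eps / (1 + eps) * lam) with (lam - lam / (1 + eps)) by (field; lra). lra. }
      assert (Hmr' : mr = exp (ln mr)) by (rewrite exp_ln; lra).
      assert (Q <= exp (- (c * lam)) * lam ^ S d1).
      { unfold Q. rewrite Hmr' at 1. 
        replace (exp (ln mr) * lam ^ S d1 * exp (- lam)) with (exp (- (lam - ln mr)) * lam ^ S d1)
          by (replace (- (lam - ln mr)) with (ln mr + - lam) by ring; rewrite exp_plus; ring).
        apply Rmult_le_compat_r. apply pow_le; lra. apply exp_le_mono. lra. }
      pose proof (exp_minus_poly lam c (S d1) Hlam Hc) as Hp. fold dr in Hp. unfold QB. lra. }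
    pose proof (HBmono Q QB (conj HQ0 H1)). unfold r1 in Hr. lra.
  -
    apply mainC; try assumption.
    cbv zeta. fold dr. fold mr. fold K. fold M1. unfold M0 in Hm0. pose proof (Rabs_pos mstar). lra.
Qed.
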